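(* Let $P$ be a finite bounded poset (minimum $\hat{0}$, maximum $\hat{1}$) with height function $h$, and let $H$ be the maximal value of $h$. Let $\operatorname{Inc}_q(P,h)$ be the set of matrices $A$ indexed by $P\times P$ with entries in $\mathbb{Z}[q,q^{-1}]$ and $A_{x,y}=0$ unless $x\le y$, with product $A\times_q B=AD_hB$, where $D_h$ is the diagonal matrix with entries $q^{h(x)}$; this is an associative product with unit $D_h^{-1}$. Let $Z$ be the zeta matrix ($Z_{x,y}=1$ if $x\le y$, $0$ otherwise), which is invertible for $\times_q$, and let $Z^{\times_q n}$, $n\in\mathbb{Z}$, be its powers for $\times_q$. Let $\Delta_q$ act on sequences $(a_n)_{n\in\mathbb{Z}}$ by $(\Delta_q a)_n=(a_n-a_{n-1})/q^n$. Then the sequence $(Z^{\times_q n})_{n\in\mathbb{Z}}$ is annihilated by $\Delta_q^{H+1}$, and for every $n\in\mathbb{Z}$, $\mathsf{Z}_{P,h}([n]_q)$ equals the entry of index $(\hat{0},\hat{1})$ of $Z^{\times_q n}$.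
   Context: $q$ is an indeterminate; $[n]_q=(q^n-1)/(q-1)$ for $n\in\mathbb{Z}$. A height function on $P$ is $h:P\to\mathbb{N}$ with $h(x)<h(y)$ whenever $y$ covers $x$. The $q$-Zeta polynomial $\mathsf{Z}_{P,h}\in\mathbb{Q}(q)[x]$ is the unique polynomial with $\mathsf{Z}_{P,h}([n]_q)=\sum_{e_1\le\cdots\le e_{n-1}\text{ in }P}q^{h(e_1)+\cdots+h(e_{n-1})}$ for all $n\ge2$ (explicitly $\sum_{k\ge1}\sum_{c_1<\cdots<c_k}q^{\sum h(c_i)}\mathsf{E}_{(h(c_1),\dots,h(c_k))}((x-[k+1]_q)/q^{k+1})$ with $\mathsf{E}_a$ the unique polynomial with $\mathsf{E}_a([m]_q)=\sum_{m'\in\mathbb{N}^k,\sum m'_i=m}q^{\sum a_im'_i}$ for $m\ge0$); its values at other $[n]_q$ are by evaluation. *)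

(* Defs.v *)
From HB Require Import structures.
From mathcomp Require Import all_boot all_order all_algebra.
Set Implicit Arguments. Unset Strict Implicit. Unset Printing Implicit Defensive.
Import Order.TTheory GRing.Theory Num.Theory.
Local Open Scope ring_scope.

Definition F : fieldType := {fraction {poly rat}}.
Definition q : F := tofrac ('X : {poly rat}).

Definition qint (n : int) : F := (q ^ n - 1) / (q - 1).

Section Poset.
Context {d : Order.disp_t} {P : finPOrderType d}.

Definition covers (x y : P) : bool :=
  ((x < y)%O && [forall z : P, ~~ ((x < z)%O && (z < y)%O)]).

Definition is_height (h : P -> nat) : Prop :=
  forall x y : P, covers x y -> (h x < h y)%N.

Definition Hmax (h : P -> nat) : nat := \max_(x : P) h x.

Definition multichain_sum (h : P -> nat) (k : nat) : F :=
  \sum_(t : k.-tuple P | sorted (fun x y : P => (x <= y)%O) t)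
     q ^+ (\sum_(x <- t) h x).

Definition is_qZeta (h : P -> nat) (p : {poly F}) : Prop :=
  forall n : nat, (2 <= n)%N -> p.[qint n] = multichain_sum h n.-1.

(* Matrices indexed by P x P, represented via enum_rank. *)
Notation MP := 'M[F]_#|P|.
Definition idx (x : P) : 'I_#|P| := enum_rank x.

Definition zetaM : MP := \matrix_(i, j) ((enum_val i <= enum_val j)%O)%:R.

Definition diagD (h : P -> nat) : MP := diag_mx (\row_i q ^+ h (enum_val i)).

Definition mulq (h : P -> nat) (A B : MP) : MP := A *m diagD h *m B.
Definition unitq (h : P -> nat) : MP := invmx (diagD h).
Definition invq (h : P -> nat) (A : MP) : MP := unitq h *m invmx A *m unitq h.

Definition powq (h : P -> nat) (A : MP) (n : int) : MP :=
  match n with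
  | Posz k => iter k (fun B => mulq h B A) (unitq h)
  | Negz k => iter k.+1 (fun B => mulq h B (invq h A)) (unitq h)
  end.

Definition DeltaQ (a : int -> MP) : int -> MP :=
  fun n => (q ^ n)^-1 *: (a n - a (n - 1)).

End Poset.

(* Main.v *)
Require Import Defs.
From HB Require Import structures.
From mathcomp Require Import all_boot all_order all_algebra.
From mathcomp Require Import zify ring.
Import Order.TTheory GRing.Theory Num.Theory.
Local Open Scope ring_scope.
Set Warnings "-notation-overridden,-ambiguous-paths".

Section Ord.
Context (d : Order.disp_t) (P : finTBPOrderType d) (h : P -> nat)
    (hh : is_height h).

Lemma lt_height_aux n : forall x y : P,
  (#|[set z : P | (x < z)%O && (z < y)%O]| < n)%N -> (x < y)%O -> (h x < h y)%N.
Proof.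
elim: n => [//|n IH] x y Hc Hxy.
case: (boolP [forall z : P, ~~ ((x < z)%O && (z < y)%O)]) => Hf.
  by apply: hh; rewrite /covers Hxy.
move/forallPn: Hf => [z]; rewrite negbK => /andP[Hxz Hzy].
have sub1 : forall w, ((x < w)%O && (w < z)%O) -> ((x < w)%O && (w < y)%O).
  by move=> w /andP[-> Hwz]; rewrite (lt_trans Hwz Hzy).
have sub2 : forall w, ((z < w)%O && (w < y)%O) -> ((x < w)%O && (w < y)%O).
  by move=> w /andP[Hzw ->]; rewrite (lt_trans Hxz Hzw).
apply: (@ltn_trans (h z)); apply: IH => //.
- rewrite -ltnS; apply: leq_trans Hc; apply: proper_card.
  apply/properP; split.
    by apply/subsetP => w; rewrite !inE; apply: sub1.
  by exists z; rewrite !inE ?Hxz ?Hzy ?ltxx ?andbF.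
- rewrite -ltnS; apply: leq_trans Hc; apply: proper_card.
  apply/properP; split.
    by apply/subsetP => w; rewrite !inE; apply: sub2.
  by exists z; rewrite !inE ?Hxz ?Hzy ?ltxx.
Qed.

Lemma lt_height (x y : P) : (x < y)%O -> (h x < h y)%N.
Proof. exact: (@lt_height_aux #|P|.+1) (leq_ltn_trans (max_card _) (ltnSn _)). Qed.

Lemma le_Hmax x : (h x <= Hmax h)%N.
Proof. by rewrite /Hmax; apply: (leq_bigmax_cond x). Qed.

End Ord.

Lemma q_neq0 : q != 0.
Proof. by rewrite /q tofrac_eq0 polyX_eq0. Qed.

Lemma qX k : q ^+ k = tofrac ('X^k : {poly rat}).
Proof. by rewrite /q rmorphXn. Qed.

Lemma qX_eq1 k : (q ^+ k == 1) = (k == 0)%N.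
Proof.
rewrite qX -(rmorph1 (@tofrac _)) tofrac_eq.
case: k => [|k].
  by rewrite expr0 !eqxx.

apply/eqP => /(congr1 (size : {poly rat} -> nat)); rewrite size_polyXn size_poly1.
by [].
Qed.

Lemma q1_neq0 : q - 1 != 0.
Proof. by rewrite subr_eq0 -(expr1 q) qX_eq1. Qed.

Lemma qX_inj m n : q ^+ m = q ^+ n -> m = n.
Proof.
rewrite !qX => /eqP; rewrite tofrac_eq => /eqP /(congr1 (size : {poly rat} -> nat)).
by rewrite !size_polyXn => -[].
Qed.

Lemma qz_unit : q \is a GRing.unit.
Proof. by rewrite unitfE q_neq0. Qed.

Lemma qzB1 (n : int) : q ^ (n - 1) = q ^ n * q^-1.
Proof. by rewrite exprzDr ?qz_unit // exprN1. Qed.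

Lemma qz_neq0 (n : int) : q ^ n != 0.
Proof. by rewrite expfz_neq0 // q_neq0. Qed.

Section Mat.
Context (d : Order.disp_t) (P : finTBPOrderType d) (h : P -> nat)
    (hh : is_height h).
Local Notation n := #|P|.
Local Notation Z := (@zetaM d P).
Local Notation D := (diagD h).
Local Notation U := (unitq h).
Local Notation ev := (fun i : 'I_n => (enum_val i : P)).

Lemma ZE i j : Z i j = ((ev i <= ev j)%O)%:R.
Proof. by rewrite mxE. Qed.

Lemma ev_lt i j : i != j -> (ev i <= ev j)%O -> (ev i < ev j)%O.
Proof.
move=> Hij Hle; rewrite lt_neqAle Hle andbT.
by apply: contra Hij => /eqP /enum_val_inj ->.
Qed.

Lemma D_unit : D \in unitmx.
Proof.
pose Di : 'M[F]_n := diag_mx (\row_i (q^-1) ^+ h (ev i)).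
have HDi : D *m Di = 1%:M.
  apply/matrixP => i j; rewrite /diagD mulmx_diag !mxE.
  by rewrite exprVn mulfV // expf_neq0 // q_neq0.
exact: (proj1 (@mulmx1_unit F n D Di HDi)).
Qed.
Lemma UD : U *m D = 1%:M. Proof. exact: mulVmx D_unit. Qed.
Lemma DU : D *m U = 1%:M. Proof. exact: mulmxV D_unit. Qed.

Definition Bm : 'M[F]_n := 1%:M - Z.
Definition Bp k := iter k (fun A => A *m Bm) 1%:M.

Lemma Bm_nz i j : Bm i j != 0 -> (ev i < ev j)%O.
Proof.
rewrite /Bm !mxE; case: (eqVneq i j) => [->|Hij]; first by rewrite lexx subrr eqxx.
rewrite sub0r oppr_eq0; case Hle: (enum_val i <= enum_val j)%O; last by rewrite eqxx.
by move=> _; apply: ev_lt.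
Qed.

Lemma Bp_vanish k i j : (h (ev j) < h (ev i) + k)%N -> Bp k i j = 0.
Proof.
elim: k i j => [|k IH] i j /=.
  rewrite addn0 => Hlt; rewrite mxE; case: (eqVneq i j) => [Eij|//].
  by rewrite Eij ltnn in Hlt.
move=> Hlt; rewrite mxE big1 // => l _.
case: (eqVneq (Bm l j) 0) => [->|Hnz]; first by rewrite mulr0.
have Hl := @lt_height d P h hh _ _ (Bm_nz _ _ Hnz).
rewrite IH ?mul0r //.
by rewrite addnS ltnS in Hlt; apply: leq_trans Hl _; rewrite -ltnS.
Qed.

Lemma Bp_H1 : Bp (Hmax h).+1 = 0.
Proof.
apply/matrixP => i j; rewrite [RHS]mxE Bp_vanish //.
by rewrite addnS ltnS (leq_trans (@le_Hmax d P h _)) // leq_addl.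
Qed.

Lemma Z_unit : Z \in unitmx.
Proof.
pose S k := \sum_(l < k) Bp l.
have HS : forall k, S k *m Z = 1%:M - Bp k.
  elim=> [|k IH]; first by rewrite /S big_ord0 mul0mx /= subrr.
  rewrite /S big_ord_recr /= mulmxDl -/(S k) IH.
  have -> : Z = 1%:M - Bm by rewrite /Bm opprB addrC subrK.
  rewrite mulmxBr mulmx1 addrA subrK //.
have HZ : S (Hmax h).+1 *m Z = 1%:M by rewrite HS Bp_H1 subr0.
exact: (proj2 (@mulmx1_unit F n _ _ HZ)).
Qed.

End Mat.

Section Pow.
Context (d : Order.disp_t) (P : finTBPOrderType d) (h : P -> nat)
    (hh : is_height h).
Local Notation n := #|P|.
Local Notation Z := (@zetaM d P).
Local Notation D := (diagD h).
Local Notation U := (unitq h).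
Local Notation a := (powq h (@zetaM d P)).
Local Notation M := (diagD h *m @zetaM d P).

Lemma mulq_inv_cancel (X : 'M[F]_n) : Defs.mulq h X (Defs.invq h Z) *m M = X.
Proof.
have ZU := mulVmx (@Z_unit d P h hh).
have UD := mulVmx (@D_unit d P h). have DU := mulmxV (@D_unit d P h).
rewrite /Defs.mulq /Defs.invq /unitq.
rewrite !mulmxA -[X *m D *m invmx D *m invmx Z *m invmx D *m D]mulmxA.
rewrite UD mulmx1 -[X *m D *m invmx D *m invmx Z *m Z]mulmxA ZU mulmx1.
by rewrite -mulmxA DU mulmx1.
Qed.

Lemma a_step (m : int) : a m = a (m - 1) *m M.
Proof.
case: m => [[|k]|k].
- have -> : (Posz 0 - 1) = Negz 0 by [].
  by rewrite mulq_inv_cancel.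
- have -> : (Posz k.+1 - 1) = Posz k by lia.
  by rewrite /= /Defs.mulq mulmxA.
- have -> : (Negz k - 1) = Negz k.+1 by rewrite !NegzE; lia.
  by rewrite [in RHS]/= mulq_inv_cancel.
Qed.


Fixpoint Qm k : 'M[F]_n :=
  if k is k'.+1 then (M - (q ^+ k')%:M) *m Qm k' else 1%:M.

Lemma M_Qm k : M *m Qm k = Qm k *m M.
Proof.
elim: k => [|k IH] /=; first by rewrite mulmx1 mul1mx.
have cm : M *m (M - (q ^+ k)%:M) = (M - (q ^+ k)%:M) *m M.
  by rewrite mulmxBr mulmxBl scalar_mxC.
by rewrite mulmxA cm -mulmxA IH mulmxA.
Qed.

Lemma QmS k : Qm k.+1 = Qm k *m (M - (q ^+ k)%:M).
Proof. by rewrite /= mulmxBl mulmxBr -M_Qm scalar_mxC. Qed.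

Lemma Qm_vanish k i j : (h (enum_val j) < k)%N -> Qm k i j = 0.
Proof.
elim: k i j => [//|k IH] i j Hjk.
rewrite QmS mxE big1 // => l _.
rewrite /diagD mul_diag_mx !mxE.
case: (eqVneq l j) => [->|Hlj].
  rewrite lexx mulr1n /=.
  case: (ltngtP (h (enum_val j)) k) => Hc.
  - by rewrite IH ?mul0r.
  - by rewrite ltnS leqNgt Hc in Hjk.
  - by rewrite Hc mulr1 mulr1n subrr mulr0.
rewrite mulr0n subr0.
case Hle: (enum_val l <= enum_val j)%O; last by rewrite mulr0 mulr0.
have Hl := @lt_height d P h hh _ _ (@ev_lt d P _ _ Hlj Hle).
by rewrite IH ?mul0r // (leq_trans Hl).
Qed.

Lemma Qm_H1 : Qm (Hmax h).+1 = 0.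
Proof.
apply/matrixP => i j; rewrite [RHS]mxE Qm_vanish //.
by rewrite ltnS (@le_Hmax d P h _).
Qed.

Lemma iterDelta k (m : int) :
  iter k DeltaQ a m = ((q ^ m)^-1) ^+ k *: (a (m - k%:Z) *m Qm k).
Proof.
elim: k m => [|k IH] m.
  by rewrite /= expr0 scale1r subr0 mulmx1.
rewrite [LHS]/= /DeltaQ !IH.
have -> : m - 1 - k%:Z = m - k.+1%:Z by lia.
rewrite (a_step (m - k%:Z)).
have -> : m - k%:Z - 1 = m - k.+1%:Z by lia.
rewrite qzB1 invfM invrK exprMn.
set c := (q ^ m)^-1. set A := a (m - k.+1%:Z).
rewrite [Qm k.+1]/= [in RHS]mulmxA [in RHS]mulmxBr mul_mx_scalar mulmxBl -scalemxAl.
by rewrite !scalerBr !scalerA mulrA -exprS.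
Qed.

End Pow.

Definition DF (e : int -> F) (m : int) : F := (q ^ m)^-1 * (e m - e (m - 1)).

Lemma const_int (g : int -> F) : (forall m, g m = g (m - 1)) -> forall m, g m = g 0.
Proof.
move=> H; case=> k.
  elim: k => [//|k IH]; rewrite H.
  by have -> : (Posz k.+1 - 1) = Posz k by lia.
rewrite NegzE; elim: k => [|k IH].
  by rewrite (H 0).
rewrite -IH (H (- k.+1%:Z)).
by have -> : (- k.+1%:Z - 1) = - k.+2%:Z by lia.
Qed.

Lemma one_sub_qinv_neq0 j : 1 - (q^-1) ^+ j.+1 != 0.
Proof.
rewrite subr_eq0 exprVn eq_sym; apply/negP => /eqP H.
have : q ^+ j.+1 = 1 by rewrite -[LHS]invrK H invr1.
by move/eqP; rewrite qX_eq1.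
Qed.

Lemma aux_field (K : fieldType) (r x y cj : K) : 1 - r != 0 ->
  cj / (1 - r) * (x * y) - cj / (1 - r) * (x * y * r) = x * (cj * y).
Proof. by move=> Hr; field. Qed.

Lemma expsum K : forall e : int -> F, (forall m, iter K DF e m = 0) ->
  exists c : nat -> F, forall m, e m = \sum_(j < K) c j * (q ^ m) ^+ j.
Proof.
elim: K => [|K IH] e H.
  by exists (fun _ => 0) => m; rewrite big_ord0; exact: (H m).
have [c Hc] : exists c : nat -> F, forall m, DF e m = \sum_(j < K) c j * (q ^ m) ^+ j.
  by apply: IH => m; rewrite -iterSr.
pose dd j := c j / (1 - (q^-1) ^+ j.+1).
pose g m := e m - \sum_(j < K) dd j * (q ^ m) ^+ j.+1.
have Hg : forall m, g m = g (m - 1).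
  move=> m; apply/eqP; rewrite -subr_eq0.
  have E1 : e m - e (m - 1) = q ^ m * \sum_(j < K) c j * (q ^ m) ^+ j.
    by rewrite -Hc /DF mulrA mulfV ?qz_neq0 // mul1r.
  have E2 : \sum_(j < K) dd j * (q ^ m) ^+ j.+1 - \sum_(j < K) dd j * (q ^ (m - 1)) ^+ j.+1
      = q ^ m * \sum_(j < K) c j * (q ^ m) ^+ j.
    rewrite -sumrB mulr_sumr; apply: eq_bigr => j _.
    rewrite qzB1 exprMn /dd.
    have := one_sub_qinv_neq0 j.
    move: (q^-1 ^+ j.+1) (q ^ m) (c j) => r x cj Hr.
    rewrite exprS; exact: aux_field.
  have -> : g m - g (m - 1) = (e m - e (m - 1)) -
     (\sum_(j < K) dd j * (q ^ m) ^+ j.+1 - \sum_(j < K) dd j * (q ^ (m - 1)) ^+ j.+1).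
    by rewrite /g; ring.
  by rewrite E1 E2 subrr.
exists (fun j => if j is j'.+1 then dd j' else g 0) => m.
rewrite big_ord_recl /= expr0 mulr1 -(@const_int g Hg m) /g.
by rewrite subrK.
Qed.

Lemma qint_eval (m : int) : ((q - 1) * qint m + 1) = q ^ m.
Proof. by rewrite /qint mulrC divfK ?q1_neq0 // subrK. Qed.

Lemma poly_eq_qint (p1 p2 : {poly F}) :
  (forall n : nat, (2 <= n)%N -> p1.[qint n] = p2.[qint n]) -> p1 = p2.
Proof.
move=> H; apply/eqP; rewrite -subr_eq0; apply/negPn/negP => Hnz.
pose rs := [seq qint (Posz i.+2) | i <- iota 0 (size (p1 - p2))].
have Hall : all (root (p1 - p2)) rs.
  apply/allP => x /mapP [i _ ->].
  by rewrite rootE hornerD hornerN H // subrr.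
have Huniq : uniq rs.
  rewrite map_inj_uniq ?iota_uniq // => a b.
  rewrite /qint => /(mulIf (invr_neq0 q1_neq0)) /addIr.
  by rewrite -!exprnP => /qX_inj [].
have := max_poly_roots Hnz Hall Huniq.
by rewrite size_map size_iota ltnn.
Qed.

Section Chains.
Context (d : Order.disp_t) (P : finTBPOrderType d) (h : P -> nat)
    (hh : is_height h).
Local Notation n := #|P|.
Local Notation Z := (@zetaM d P).
Local Notation D := (diagD h).
Local Notation U := (unitq h).
Local Notation a := (powq h (@zetaM d P)).
Local Notation le := (fun x y : P => (x <= y)%O).

Lemma a_left (k : nat) : a (Posz k.+1) = Z *m D *m a k.
Proof.
have UD := mulVmx (@D_unit d P h). have DU := mulmxV (@D_unit d P h).
elim: k => [|k IH].
  by rewrite /= /Defs.mulq /unitq UD mul1mx -mulmxA DU mulmx1.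
have -> : a (Posz k.+2) = a (Posz k.+1) *m D *m Z by [].
rewrite {1}IH.
have -> : a (Posz k.+1) = a (Posz k) *m D *m Z by [].
by rewrite !mulmxA.
Qed.

Lemma ZE' (x y : P) : Z (idx x) (idx y) = (x <= y)%O%:R.
Proof. by rewrite mxE /idx !enum_rankK. Qed.

Lemma sum_idx (G : 'I_n -> F) : \sum_(l < n) G l = \sum_(z : P) G (idx z).
Proof.
rewrite (reindex (@idx d P)) //=.
exact: onW_bij (enum_rank_bij _).
Qed.

Lemma a_chain (k : nat) (x y : P) :
  a (Posz k.+1) (idx x) (idx y) =
  \sum_(t : k.-tuple P | path le x t && le (last x t) y) q ^+ (\sum_(z <- t) h z).
Proof.
elim: k x y => [|k IH] x y.
  rewrite a_left /= /unitq -mulmxA (mulmxV (@D_unit d P h)) mulmx1 ZE'.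
  rewrite big_mkcond (eq_bigr (fun _ => (le x y)%:R)); last first.
    by move=> t _; rewrite tuple0 /= big_nil expr0; case: (x <= y)%O.
  by rewrite sumr_const card_tuple expn0 mulr1n.
rewrite a_left mxE sum_idx.
transitivity (\sum_(z : P) \sum_(t : k.-tuple P)
   (if (le x z && path le z t && le (last z t) y) then q ^+ (h z + \sum_(w <- t) h w) else 0)).
  apply: eq_bigr => z _.
  rewrite IH mulr_sumr big_mkcond; apply: eq_bigr => t _.
  rewrite /diagD mul_mx_diag !mxE /idx !enum_rankK.
  case: (x <= z)%O; case: (path _ _ _ && _) => /=;
    by rewrite ?mul1r ?mul0r ?mulr0 ?exprD.
rewrite pair_big /=.
symmetry; rewrite big_mkcond (reindex (fun p : P * k.-tuple P => [tuple of p.1 :: p.2])) /=.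
  apply: eq_bigr => -[z t] _ /=.
  by rewrite big_cons.
apply: onW_bij.
exists (fun t : k.+1.-tuple P => (thead t, [tuple of behead t])).
  move=> [z t] /=; congr (_, _).
  by apply: val_inj.
move=> t /=; by rewrite [RHS]tuple_eta.
Qed.

End Chains.

Section Main.
Context (d : Order.disp_t) (P : finTBPOrderType d) (h : P -> nat)
    (hh : is_height h).
Local Notation n := #|P|.
Local Notation a := (powq h (@zetaM d P)).

Lemma multichain_a k : a (Posz k.+1) (idx (\bot : P)%O) (idx (\top : P)%O) = multichain_sum h k.
Proof.
rewrite (@a_chain d P h) /multichain_sum; apply: eq_bigl => t.
rewrite lex1 andbT.
by case: t => [[|z s] Hs] //=; rewrite le0x.
Qed.

Lemma iterDF_entry (A : int -> 'M[F]_n) i j k m :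
  iter k DF (fun t => A t i j) m = iter k DeltaQ A m i j.
Proof.
elim: k m => [//|k IH] m.
by rewrite /= /DF !IH /DeltaQ !mxE.
Qed.

End Main.

Theorem mainTheorem9 (d : Order.disp_t) (P : finTBPOrderType d) (h : P -> nat)
    (hh : is_height h) :
  (forall n : int,
      iter (Hmax h).+1 DeltaQ (powq h zetaM) n = 0) /\
  (exists p : {poly F}, is_qZeta h p) /\
  (forall p : {poly F}, is_qZeta h p ->
     forall n : int,
       p.[qint n] = powq h zetaM n (idx (\bot : P)%O) (idx (\top : P)%O)).
Proof.
have Hit : forall m, iter (Hmax h).+1 DeltaQ (powq h (@zetaM d P)) m = 0.
  by move=> m; rewrite (@iterDelta d P h hh) (@Qm_H1 d P h hh) mulmx0 scaler0.
split => //.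
pose e m := powq h (@zetaM d P) m (idx (\bot : P)%O) (idx (\top : P)%O).
have [c Hc] : exists c : nat -> F, forall m, e m = \sum_(j < (Hmax h).+1) c j * (q ^ m) ^+ j.
  by apply: expsum => m; rewrite /e iterDF_entry Hit mxE.
pose p0 := \sum_(j < (Hmax h).+1) (c j)%:P * ((q - 1)%:P * 'X + 1) ^+ j.
have Hp0 : forall m, p0.[qint m] = e m.
  move=> m; rewrite Hc horner_sum; apply: eq_bigr => j _.
  by rewrite hornerCM horner_exp hornerD hornerCM hornerX hornerC qint_eval.
have Hz : is_qZeta h p0.
  move=> [|[|k]] // _; rewrite Hp0 /e.
  exact: (@multichain_a d P h k.+1).
split; first by exists p0.
move=> p Hp m.
have -> : p = p0 by apply: poly_eq_qint => nn Hn; rewrite Hp // Hz.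
exact: Hp0.
Qed.
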